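(* For every PTM $M$, the probabilistic function $PTC_M:\mathbb{N}\times\mathbb{N}\to\mathcal D(\mathbb{N})$ defined by $PTC_M(x,y)(0)=PT^0_M(x,y)$, $PTC_M(x,y)(1)=PT^1_M(x,y)$ and $PTC_M(x,y)(z)=0$ for $z\ge2$ belongs to $\mathscr{PR}$.
   Context: PTM: Turing machine with two transition functions $\delta_0,\delta_1$ (each applied with probability $1/2$) defined on non-final configurations; initial configuration on input string $w=a\cdot v$ is $\langle\varepsilon,a,v,q_s\rangle$; final configurations are $\langle s,a,\varepsilon,q\rangle$ with $q$ final. $n\mapsto\overline n$ is the length-lexicographic bijection $\mathbb{N}\to\{0,1\}^*$ ($\overline0=\varepsilon,\overline1=0,\overline2=1,\overline3=00,\dots$). Computation tree $CT_M(x)$: nodes are binary strings, root $\varepsilon$ labelled by the initial configuration on $\overline x$, a node $b$ labelled by a non-final $C$ has children $b0,b1$ labelled $\delta_0(C),\delta_1(C)$, nodes labelled by final configurations have no children; $y\in\mathbb{N}$ denotes node $\overline y$, a leaf if it is in the tree with final label. $PT_M(x,y)=2^{-|\overline y|}$. Recursively in $y$: if $y$ is not a leaf of $CT_M(x)$, $PT^1_M(x,y)=1$, $PT^0_M(x,y)=0$; otherwise $PT^0_M(x,y)=PT_M(x,y)/\prod_{k<y}PT^1_M(x,k)$ and $PT^1_M(x,y)=1-PT^0_M(x,y)$. $\mathcal D(X)$: functions $X\to[0,1]$ with sum $\le1$; PF: function $\mathbb{N}^k\to\mathcal D(\mathbb{N})$. Basic PFs: $z(n)(0)=1$; $s(n)(n+1)=1$;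 $\Pi^n_m(k_1,\dots,k_n)(k_m)=1$; $r(x)(x)=r(x)(x+1)=1/2$ (other values $0$). Generalized composition $(f\odot(g_1,\dots,g_n))(\vec x)(y)=\sum_{z_1,\dots,z_n} f(z_1,\dots,z_n)(y)\prod_i g_i(\vec x)(z_i)$; primitive recursion $h(\vec x,0)=f(\vec x)$, $h(\vec x,y+1)(w)=\sum_z h(\vec x,y)(z)\, g(\vec x,y,z)(w)$; minimization $\mu f(\vec x)(y)=f(\vec x,y)(0)\prod_{z<y}\sum_{k>0}f(\vec x,z)(k)$. $\mathscr{PR}$ is the smallest class of PFs containing the basic PFs and closed under these operations. *)

(* Defs.v *)
From Stdlib Require Import Reals List PArith.
Import ListNotations.
Open Scope R_scope.

(* Length-lexicographic bijection  n |-> nbar n : nat -> {0,1}^*       *)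
(* nbar n = binary expansion of n+1 with its leading 1 removed;        *)
(* false = bit 0, true = bit 1.  nbar 0 = [], nbar 1 = [0], nbar 2 = [1],*)
(* nbar 3 = [0;0], ...                                                 *)
Fixpoint pos_bits (p : positive) : list bool :=
  match p with
  | xH => []
  | xO p' => pos_bits p' ++ [false]
  | xI p' => pos_bits p' ++ [true]
  end.

Definition nbar (n : nat) : list bool := pos_bits (Pos.of_succ_nat n).

Inductive Dir := DLeft | DStay | DRight.

Record PTM := mkPTM {
  Q : Type;
  Gam : Type;
  Q_finite : exists l : list Q, forall q, In q l;
  Gam_finite : exists l : list Gam, forall a, In a l;
  blank : Gam;
  sym0 : Gam;
  sym1 : Gam;
  sym01 : sym0 <> sym1;
  sym0b : sym0 <> blank;
  sym1b : sym1 <> blank;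
  qstart : Q;
  qfinal : Q -> bool;
  delta : bool -> Q -> Gam -> Q * Gam * Dir   (* delta false = delta_0, delta true = delta_1 *)
}.

(* Configuration <s, a, v, q>: the tape reads s . a . v with the head on a.
   The left part s is stored REVERSED (head of the list = cell just left of the head). *)
Record config (Qt Gt : Type) := mkConf {
  cleft : list Gt; ccur : Gt; cright : list Gt; cstate : Qt }.
Arguments mkConf {Qt Gt}.
Arguments cleft {Qt Gt}.
Arguments ccur {Qt Gt}.
Arguments cright {Qt Gt}.
Arguments cstate {Qt Gt}.

Definition Conf (M : PTM) := config (Q M) (Gam M).

Definition step (M : PTM) (i : bool) (C : Conf M) : Conf M :=
  match delta M i (cstate C) (ccur C) with
  | (q', a', d) =>
    match d with
    | DStay => mkConf (cleft C) a' (cright C) q'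
    | DLeft =>
        match cleft C with
        | [] => mkConf [] (blank M) (a' :: cright C) q'
        | c :: s' => mkConf s' c (a' :: cright C) q'
        end
    | DRight =>
        match cright C with
        | [] => mkConf (a' :: cleft C) (blank M) [] q'
        | c :: v' => mkConf (a' :: cleft C) c v' q'
        end
    end
  end.

Definition is_final (M : PTM) (C : Conf M) : bool :=
  match cright C with
  | [] => qfinal M (cstate C)
  | _ :: _ => false
  end.

Definition init (M : PTM) (x : nat) : Conf M :=
  match map (fun b : bool => if b then sym1 M else sym0 M) (nbar x) with
  | [] => mkConf [] (blank M) [] (qstart M)
  | a :: v => mkConf [] a v (qstart M)
  end.

(* Label of the node bs of the computation tree rooted at C:
   Some C' if bs is a node of the tree labelled C', None if bs is not in the tree. *)
Fixpoint follow (M : PTM) (C : Conf M) (bs : list bool) : option (Conf M) :=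
  match bs with
  | [] => Some C
  | i :: bs' => if is_final M C then None else follow M (step M i C) bs'
  end.

Definition is_leaf (M : PTM) (x y : nat) : bool :=
  match follow M (init M x) (nbar y) with
  | Some C => is_final M C
  | None => false
  end.

Definition PT (M : PTM) (x y : nat) : R := (/ 2) ^ length (nbar y).

Fixpoint prodPT1 (M : PTM) (x n : nat) : R :=
  match n with
  | O => 1
  | S k => prodPT1 M x k *
           (if is_leaf M x k then 1 - PT M x k / prodPT1 M x k else 1)
  end.

Definition PT0 (M : PTM) (x y : nat) : R :=
  if is_leaf M x y then PT M x y / prodPT1 M x y else 0.

Definition PT1 (M : PTM) (x y : nat) : R :=
  if is_leaf M x y then 1 - PT0 M x y else 1.

Definition PTC (M : PTM) (x y z : nat) : R :=
  match z with
  | O => PT0 M x y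
  | 1%nat => PT1 M x y
  | _ => 0
  end.

(* A PF of arity k is represented by  f : list nat -> nat -> R,  only  *)
(* its values on argument lists of length k being relevant.            *)
Definition PF := list nat -> nat -> R.

Fixpoint fsum (K : nat) (f : nat -> R) : R :=
  match K with O => 0 | S K' => fsum K' f + f K' end.

Fixpoint fprod (n : nat) (s : nat -> R) : R :=
  match n with O => 1 | S n' => fprod n' s * s n' end.

Fixpoint box (n K : nat) (a : list nat -> R) : R :=
  match n with
  | O => a []
  | S n' => fsum K (fun i => box n' K (fun zs => a (i :: zs)))
  end.

(* sum over N^n (terms are nonnegative in all uses) *)
Definition has_sum_n (n : nat) (a : list nat -> R) (l : R) : Prop :=
  Un_cv (fun K => box n K a) l.

Fixpoint prodg (gs : list PF) (xs : list nat) (zs : list nat) : R :=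
  match gs, zs with
  | g :: gs', z :: zs' => g xs z * prodg gs' xs zs'
  | _, _ => 1
  end.

Inductive PR : nat -> PF -> Prop :=
| PR_zero (h : PF) :
    (forall n y, h [n] y = if Nat.eqb y 0 then 1 else 0) -> PR 1 h
| PR_succ (h : PF) :
    (forall n y, h [n] y = if Nat.eqb y (S n) then 1 else 0) -> PR 1 h
| PR_proj (n m : nat) (h : PF) :
    (1 <= m <= n)%nat ->
    (forall xs y, length xs = n ->
       h xs y = if Nat.eqb y (nth (m - 1) xs 0%nat) then 1 else 0) -> PR n h
| PR_rand (h : PF) :
    (forall x y, h [x] y =
       if Nat.eqb y x then / 2 else if Nat.eqb y (S x) then / 2 else 0) -> PR 1 h
| PR_comp (k n : nat) (f : PF) (gs : list PF) (h : PF) :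
    (1 <= n)%nat ->
    PR n f -> length gs = n -> (forall g, In g gs -> PR k g) ->
    (forall xs y, length xs = k ->
       has_sum_n n (fun zs => f zs y * prodg gs xs zs) (h xs y)) ->
    PR k h
| PR_rec (k : nat) (f g h : PF) :
    PR k f -> PR (S (S k)) g ->
    (forall xs w, length xs = k -> h (xs ++ [0%nat]) w = f xs w) ->
    (forall xs y w, length xs = k ->
       infinite_sum (fun z => h (xs ++ [y]) z * g (xs ++ [y; z]) w)
                    (h (xs ++ [S y]) w)) ->
    PR (S k) h
| PR_min (k : nat) (f h : PF) :
    PR (S k) f ->
    (forall xs, length xs = k ->
       exists s : nat -> R,
         (forall z, infinite_sum (fun j => f (xs ++ [z]) (S j)) (s z)) /\
         (forall y, h xs y = f (xs ++ [y]) 0%nat * fprod y s)) ->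
    PR k h.

(* Main.v *)
Require Import Defs.
From Stdlib Require Import Reals List Lia Arith PArith Lra ClassicalEpsilon.
Import ListNotations.

Import ListNotations.
Open Scope R_scope.

Definition pt (v : nat) (y : nat) : R := if Nat.eqb y v then 1 else 0.

Definition DPR (k : nat) (F : list nat -> nat) : Prop :=
  exists h : PF, PR k h /\ forall xs y, length xs = k -> h xs y = pt (F xs) y.

Lemma DPR_ext k F G : (forall xs, length xs = k -> F xs = G xs) -> DPR k F -> DPR k G.
Proof.
  intros E [h [Hh Hv]]. exists h; split; auto.
  intros xs y L. rewrite Hv by auto. rewrite E; auto.
Qed.

Lemma DPR_proj k m : (m < k)%nat -> DPR k (fun xs => nth m xs 0%nat).
Proof.
  intros H. exists (fun xs y => pt (nth m xs 0%nat) y). split; auto.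
  apply (PR_proj k (S m)). lia.
  intros xs y _. unfold pt. replace (S m - 1)%nat with m by lia. reflexivity.
Qed.

Lemma len1 (xs : list nat) : length xs = 1%nat -> xs = [nth 0 xs 0%nat].
Proof. destruct xs as [|a [|b l]]; simpl; intros; try discriminate; reflexivity. Qed.

Lemma DPR_Z : DPR 1 (fun _ => 0%nat).
Proof.
  exists (fun xs y => pt 0 y). split; auto.
  apply PR_zero. intros; reflexivity.
Qed.

Lemma DPR_S : DPR 1 (fun l => S (nth 0 l 0%nat)).
Proof.
  exists (fun xs y => pt (S (nth 0 xs 0%nat)) y). split; auto.
  apply PR_succ. intros; reflexivity.
Qed.

Lemma fsum_single K f v : (forall i, i <> v -> f i = 0) ->
  fsum K f = if Nat.ltb v K then f v else 0.
Proof.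
  intros H. induction K; simpl. reflexivity.
  rewrite IHK. destruct (Nat.eq_dec K v).
  - subst. rewrite (proj2 (Nat.ltb_ge v v)) by lia.
    rewrite (proj2 (Nat.ltb_lt v (S v))) by lia. ring.
  - rewrite (H K n). destruct (Nat.ltb v K) eqn:E1.
    + apply Nat.ltb_lt in E1. rewrite (proj2 (Nat.ltb_lt v (S K))) by lia. ring.
    + apply Nat.ltb_ge in E1. rewrite (proj2 (Nat.ltb_ge v (S K))) by lia. ring.
Qed.

Lemma box_single n K (a : list nat -> R) vs : length vs = n ->
  (forall zs, length zs = n -> zs <> vs -> a zs = 0) ->
  box n K a = if forallb (fun v => Nat.ltb v K) vs then a vs else 0.
Proof.
  revert a vs. induction n; intros a vs Hl Ha.
  - destruct vs; [|discriminate]. reflexivity.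
  - destruct vs as [|v vs]; [discriminate|]. simpl in Hl. injection Hl as Hl.
    simpl.
    assert (E : forall i, box n K (fun zs => a (i :: zs)) =
      if forallb (fun v => Nat.ltb v K) vs then a (i :: vs) else 0).
    { intros i. apply (IHn (fun zs => a (i :: zs)) vs); auto. intros zs Hz Hne. apply Ha. simpl; lia.
      intro E; injection E; intros; auto. }
    rewrite (fsum_single K _ v).
    + rewrite E. destruct (Nat.ltb v K); simpl; destruct (forallb _ vs); reflexivity.
    + intros i Hi. rewrite E. destruct (forallb _ vs); auto.
      apply Ha. simpl; lia. intro E2; injection E2; intros; auto.
Qed.

Lemma Un_cv_eventually (u : nat -> R) l N : (forall n, (n >= N)%nat -> u n = l) -> Un_cv u l.
Proof.
  intros H eps He. exists N. intros n Hn. rewrite H by auto. unfold Rdist.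
  replace (l - l) with 0 by ring. rewrite Rabs_R0. auto.
Qed.

Lemma sum_single f v n : (forall i, i <> v -> f i = 0) ->
  sum_f_R0 f n = if Nat.leb v n then f v else 0.
Proof.
  intros H. induction n; simpl.
  - destruct v; simpl; auto.
  - rewrite IHn. destruct (Nat.eq_dec (S n) v).
    + subst. rewrite (proj2 (Nat.leb_gt (S n) n)) by lia.
      rewrite Nat.leb_refl. ring.
    + rewrite (H (S n) n0). destruct (Nat.leb v n) eqn:E1.
      * apply Nat.leb_le in E1. rewrite (proj2 (Nat.leb_le v (S n))) by lia. ring.
      * apply Nat.leb_gt in E1. rewrite (proj2 (Nat.leb_gt v (S n))) by lia. ring.
Qed.

Lemma infinite_sum_single f v : (forall i, i <> v -> f i = 0) -> infinite_sum f (f v).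
Proof.
  intros H eps He. exists v. intros n Hn. rewrite (sum_single f v n H).
  rewrite (proj2 (Nat.leb_le v n)) by lia. unfold Rdist.
  replace (f v - f v) with 0 by ring. rewrite Rabs_R0. auto.
Qed.

Lemma pt_neq v y : y <> v -> pt v y = 0.
Proof. intros H. unfold pt. destruct (Nat.eqb_spec y v); tauto. Qed.
Lemma pt_eq v : pt v v = 1.
Proof. unfold pt. rewrite Nat.eqb_refl. reflexivity. Qed.

Lemma choose_hs k (gs : list (list nat -> nat)) : Forall (DPR k) gs ->
  exists hs : list PF, Forall2 (fun h g => PR k h /\ forall xs y, length xs = k -> h xs y = pt (g xs) y) hs gs.
Proof.
  induction 1. exists []; constructor.
  destruct H as [h Hh]. destruct IHForall as [hs Hs]. exists (h :: hs). constructor; auto.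
Qed.

Lemma prodg_pt k hs gs xs zs : length xs = k ->
  Forall2 (fun h g => PR k h /\ forall xs y, length xs = k -> h xs y = pt (g xs) y) hs gs ->
  length zs = length gs ->
  prodg hs xs zs = if list_eq_dec Nat.eq_dec zs (map (fun g => g xs) gs) then 1 else 0.
Proof.
  intros Lx HF. revert zs. induction HF; intros zs Lz.
  - destruct zs; [|discriminate]. reflexivity.
  - destruct zs as [|z zs]; [discriminate|]. simpl in Lz. injection Lz as Lz.
    cbn [prodg map]. destruct H as [_ Hx]. rewrite Hx by auto. rewrite IHHF by auto.
    destruct (Nat.eq_dec z (y xs)).
    + subst. rewrite pt_eq.
      repeat match goal with |- context[list_eq_dec ?d ?a ?b] => destruct (list_eq_dec d a b) end;
      try ring; congruence.
    + rewrite pt_neq by auto.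
      repeat match goal with |- context[list_eq_dec ?d ?a ?b] => destruct (list_eq_dec d a b) end;
      try ring; congruence.
Qed.

Fixpoint lsum (l : list nat) : nat := match l with [] => 0%nat | a :: l => (a + lsum l)%nat end.

Lemma forallb_lt K vs : (lsum vs < K)%nat -> forallb (fun v => Nat.ltb v K) vs = true.
Proof.
  induction vs; simpl; intros; auto. rewrite (proj2 (Nat.ltb_lt a K)) by lia. simpl. apply IHvs. lia.
Qed.

Lemma F2_In_l {A B} (P : A -> B -> Prop) l l' x : Forall2 P l l' -> In x l -> exists y, P x y.
Proof. induction 1; simpl; intros []; subst; eauto. Qed.

Lemma DPR_comp k n F gs : (1 <= n)%nat -> DPR n F -> length gs = n -> Forall (DPR k) gs ->
  DPR k (fun xs => F (map (fun g => g xs) gs)).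
Proof.
  intros Hn [f [Hf Hfv]] Hl HF.
  destruct (choose_hs k gs HF) as [hs Hs].
  exists (fun xs y => pt (F (map (fun g => g xs) gs)) y). split; [|auto].
  apply (PR_comp k n f hs); auto.
  - rewrite (Forall2_length Hs). auto.
  - intros g Hg. destruct (F2_In_l _ _ _ _ Hs Hg) as [? [? _]]; auto.
  - intros xs y Lx. set (vs := map (fun g => g xs) gs).
    apply (Un_cv_eventually _ _ (S (lsum vs))). intros K HK.
    rewrite (box_single n K _ vs).
    + rewrite forallb_lt by lia. rewrite (prodg_pt k hs gs xs vs); auto.
      2:{ unfold vs; rewrite length_map; auto. }
      rewrite Hfv by (unfold vs; rewrite length_map; auto).
      match goal with |- context[list_eq_dec ?d ?a ?b] => destruct (list_eq_dec d a b) end;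
      [ring| unfold vs in *; congruence].
    + unfold vs; rewrite length_map; auto.
    + intros zs Hz Hne. rewrite (prodg_pt k hs gs xs zs) by (auto; lia).
      match goal with |- context[list_eq_dec ?d ?a ?b] => destruct (list_eq_dec d a b) end;
      [unfold vs in *; congruence| ring].
Qed.

Import ListNotations.
Open Scope R_scope.

Fixpoint prec (F G : list nat -> nat) (xs : list nat) (y : nat) : nat :=
  match y with O => F xs | S y' => G (xs ++ [y'; prec F G xs y']) end.

Lemma firstn_app_len (xs l : list nat) : firstn (length xs) (xs ++ l) = xs.
Proof. induction xs; simpl. destruct l; reflexivity. f_equal; auto. Qed.
Lemma nth_app_len (xs : list nat) y : nth (length xs) (xs ++ [y]) 0%nat = y.
Proof. induction xs; simpl; auto. Qed.

Lemma DPR_rec k F G : DPR k F -> DPR (S (S k)) G ->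
  DPR (S k) (fun l => prec F G (firstn k l) (nth k l 0%nat)).
Proof.
  intros [f [Hf Hfv]] [g [Hg Hgv]].
  exists (fun l w => pt (prec F G (firstn k l) (nth k l 0%nat)) w). split; [|auto].
  apply (PR_rec k f g); auto.
  - intros xs w L. subst k. rewrite firstn_app_len, nth_app_len. simpl. rewrite Hfv; auto.
  - intros xs y w L. subst k. rewrite !firstn_app_len, !nth_app_len.
    set (v := prec F G xs y).
    assert (HH := infinite_sum_single (fun z => pt v z * g (xs ++ [y; z]) w) v). cbv beta in HH.
    replace (pt (prec F G xs (S y)) w) with (pt v v * g (xs ++ [y; v]) w).
    + apply HH. intros i Hi. rewrite pt_neq by auto. ring.
    + simpl. rewrite pt_eq, Hgv. fold v. ring. rewrite length_app. simpl. lia.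
Qed.

Definition D1 f := DPR 1 (fun l => f (nth 0 l 0%nat)).
Definition D2 f := DPR 2 (fun l => f (nth 0 l 0%nat) (nth 1 l 0%nat)).
Definition D3 f := DPR 3 (fun l => f (nth 0 l 0%nat) (nth 1 l 0%nat) (nth 2 l 0%nat)).
Definition D4 f := DPR 4 (fun l => f (nth 0 l 0%nat) (nth 1 l 0%nat) (nth 2 l 0%nat) (nth 3 l 0%nat)).

Lemma c1 k f g : D1 f -> DPR k g -> DPR k (fun xs => f (g xs)).
Proof.
  intros H1 H2. apply (DPR_comp k 1 _ [g]) in H1; [exact H1|lia|reflexivity|repeat constructor; auto].
Qed.
Lemma c2 k f g1 g2 : D2 f -> DPR k g1 -> DPR k g2 -> DPR k (fun xs => f (g1 xs) (g2 xs)).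
Proof.
  intros H1 H2 H3. apply (DPR_comp k 2 _ [g1;g2]) in H1; [exact H1|lia|reflexivity|repeat constructor; auto].
Qed.
Lemma c3 k f g1 g2 g3 : D3 f -> DPR k g1 -> DPR k g2 -> DPR k g3 ->
  DPR k (fun xs => f (g1 xs) (g2 xs) (g3 xs)).
Proof.
  intros H1 H2 H3 H4. apply (DPR_comp k 3 _ [g1;g2;g3]) in H1; [exact H1|lia|reflexivity|repeat constructor; auto].
Qed.
Lemma c4 k f g1 g2 g3 g4 : D4 f -> DPR k g1 -> DPR k g2 -> DPR k g3 -> DPR k g4 ->
  DPR k (fun xs => f (g1 xs) (g2 xs) (g3 xs) (g4 xs)).
Proof.
  intros H1 H2 H3 H4 H5. apply (DPR_comp k 4 _ [g1;g2;g3;g4]) in H1; [exact H1|lia|reflexivity|repeat constructor; auto].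
Qed.

Lemma p0 k : DPR (S k) (fun xs => nth 0 xs 0%nat). Proof. apply DPR_proj; lia. Qed.
Lemma p1 k : DPR (S (S k)) (fun xs => nth 1 xs 0%nat). Proof. apply DPR_proj; lia. Qed.
Lemma p2 k : DPR (S (S (S k))) (fun xs => nth 2 xs 0%nat). Proof. apply DPR_proj; lia. Qed.
Lemma p3 k : DPR (S (S (S (S k)))) (fun xs => nth 3 xs 0%nat). Proof. apply DPR_proj; lia. Qed.

Lemma cst k c : DPR (S k) (fun _ => c).
Proof.
  induction c.
  - apply (c1 _ (fun _ => 0%nat) (fun xs => nth 0 xs 0%nat)). apply DPR_Z. apply p0.
  - apply (c1 _ S (fun _ => c)); auto. apply DPR_S.
Qed.

Lemma D1S : D1 S. Proof. apply DPR_S. Qed.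

Fixpoint Rec1 (f : nat -> nat) (g : nat -> nat -> nat -> nat) a y :=
  match y with O => f a | S y' => g a y' (Rec1 f g a y') end.
Fixpoint Rec2 (f : nat -> nat -> nat) (g : nat -> nat -> nat -> nat -> nat) a b y :=
  match y with O => f a b | S y' => g a b y' (Rec2 f g a b y') end.

Lemma rec2 f g : D1 f -> D3 g -> D2 (Rec1 f g).
Proof.
  intros H1 H2. pose proof (DPR_rec 1 _ _ H1 H2) as H. revert H. apply DPR_ext.
  intros [|a [|y [|]]]; simpl; intros L; try discriminate.
  induction y; simpl; auto; rewrite IHy; reflexivity.
Qed.

Lemma rec3 f g : D2 f -> D4 g -> D3 (Rec2 f g).
Proof.
  intros H1 H2. pose proof (DPR_rec 2 _ _ H1 H2) as H. revert H. apply DPR_ext.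
  intros [|a [|b [|y [|]]]]; simpl; intros L; try discriminate.
  induction y; simpl; auto; rewrite IHy; reflexivity.
Qed.

Ltac dp :=
  cbv beta;
  match goal with
  | |- DPR _ (fun _ => nth 0 _ _) => apply p0
  | |- DPR _ (fun _ => nth 1 _ _) => apply p1
  | |- DPR _ (fun _ => nth 2 _ _) => apply p2
  | |- DPR _ (fun _ => nth 3 _ _) => apply p3
  | |- DPR (S _) (fun _ => ?c) => apply cst
  | |- DPR _ (fun xs => ?f (@?a xs) (@?b xs) (@?c xs) (@?d xs)) => apply (c4 _ f a b c d); [solve [auto] | dp | dp | dp | dp]
  | |- DPR _ (fun xs => ?f (@?a xs) (@?b xs) (@?c xs)) => apply (c3 _ f a b c); [solve [auto] | dp | dp | dp]
  | |- DPR _ (fun xs => ?f (@?a xs) (@?b xs)) => apply (c2 _ f a b); [solve [auto] | dp | dp]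
  | |- DPR _ (fun xs => ?f (@?a xs)) => apply (c1 _ f a); [solve [auto] | dp]
  end.

Lemma test (f : nat -> nat -> nat) : D2 f -> D3 (fun a b c => f (S c) (f a 3%nat)).
Proof. intros. pose proof D1S. unfold D3. dp. Qed.

Import ListNotations.
Local Open Scope nat_scope.

Lemma D1_ext f g : (forall a, f a = g a) -> D1 f -> D1 g.
Proof. intros E. apply DPR_ext. intros; auto. Qed.
Lemma D2_ext f g : (forall a b, f a b = g a b) -> D2 f -> D2 g.
Proof. intros E. apply DPR_ext. intros; auto. Qed.
Lemma D3_ext f g : (forall a b c, f a b c = g a b c) -> D3 f -> D3 g.
Proof. intros E. apply DPR_ext. intros; auto. Qed.

Lemma D1id : D1 (fun x => x). Proof. unfold D1. dp. Qed.

Lemma D_add : D2 Nat.add.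
Proof.
  apply (D2_ext (Rec1 (fun x => x) (fun _ _ p => S p))).
  - intros a b. induction b; simpl; lia.
  - apply rec2. apply D1id. pose proof D1S. unfold D3. dp.
Qed.
Global Hint Resolve D_add D1S : core.

Lemma D_pred : D1 pred.
Proof.
  assert (H : D2 (Rec1 (fun _ => 0) (fun _ y _ => y))).
  { apply rec2. unfold D1. dp. unfold D3. dp. }
  apply (D1_ext (fun y => Rec1 (fun _ => 0) (fun _ y _ => y) 0 y)).
  - intros [|a]; reflexivity.
  - unfold D1. dp.
Qed.
Global Hint Resolve D_pred : core.

Lemma D_sub : D2 Nat.sub.
Proof.
  apply (D2_ext (Rec1 (fun x => x) (fun _ _ p => pred p))).
  - intros a b. induction b; simpl. lia. rewrite IHb. lia.
  - apply rec2. apply D1id. unfold D3. dp.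
Qed.
Global Hint Resolve D_sub : core.

Lemma D_mul : D2 Nat.mul.
Proof.
  apply (D2_ext (Rec1 (fun _ => 0) (fun a _ p => p + a))).
  - intros a b. induction b; simpl. lia. rewrite IHb. lia.
  - apply rec2. unfold D1; dp. unfold D3. dp.
Qed.
Global Hint Resolve D_mul : core.

Definition sel (a b c : nat) := match c with O => b | S _ => a end.
Lemma D_sel : D3 sel.
Proof.
  apply (D3_ext (Rec2 (fun a b => b) (fun a b _ _ => a))).
  - intros a b [|c]; reflexivity.
  - apply rec3. unfold D2; dp. unfold D4; dp.
Qed.
Global Hint Resolve D_sel : core.

Definition eqv (a b : nat) := sel 0 1 ((a - b) + (b - a)).
Lemma D_eqv : D2 eqv. Proof. unfold D2, eqv. dp. Qed.
Global Hint Resolve D_eqv : core.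
Lemma eqv_spec a b : eqv a b = if Nat.eqb a b then 1 else 0.
Proof.
  unfold eqv. destruct (Nat.eqb_spec a b). subst. rewrite Nat.sub_diag. reflexivity.
  destruct (a - b + (b - a)) eqn:E. lia. reflexivity.
Qed.
Definition lev (a b : nat) := sel 0 1 (a - b).
Lemma D_lev : D2 lev. Proof. unfold D2, lev. dp. Qed.
Global Hint Resolve D_lev : core.
Lemma lev_spec a b : lev a b = if Nat.leb a b then 1 else 0.
Proof.
  unfold lev. destruct (Nat.leb_spec a b).
  replace (a - b) with 0 by lia. reflexivity. destruct (a - b) eqn:E. lia. reflexivity.
Qed.

Fixpoint modr (d n : nat) : nat :=
  match n with O => 0 | S n' => sel 0 (S (modr d n')) (eqv (S (modr d n')) d) end.
Fixpoint divr (d n : nat) : nat :=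
  match n with O => 0 | S n' => divr d n' + eqv (S (modr d n')) d end.

Lemma D_modr : D2 modr.
Proof.
  apply (D2_ext (Rec1 (fun _ => 0) (fun d _ p => sel 0 (S p) (eqv (S p) d)))).
  - intros a b. induction b; simpl; auto; rewrite IHb; reflexivity.
  - apply rec2. unfold D1; dp. unfold D3; dp.
Qed.
Global Hint Resolve D_modr : core.
Lemma D_divr : D2 divr.
Proof.
  apply (D2_ext (Rec1 (fun _ => 0) (fun d n p => p + eqv (S (modr d n)) d))).
  - intros a b. induction b; simpl; auto.
  - apply rec2. unfold D1; dp. unfold D3; dp.
Qed.
Global Hint Resolve D_divr : core.

Lemma modr_inv d n : 0 < d -> n = d * divr d n + modr d n /\ modr d n < d.
Proof.
  intros Hd. induction n; simpl. lia.
  destruct IHn as [H1 H2]. rewrite eqv_spec. destruct (Nat.eqb_spec (S (modr d n)) d); simpl; lia.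
Qed.
Lemma modr_mod d n : 0 < d -> modr d n = n mod d.
Proof. intros Hd. destruct (modr_inv d n Hd). apply (Nat.mod_unique _ _ (divr d n)); lia. Qed.
Lemma divr_div d n : 0 < d -> divr d n = n / d.
Proof. intros Hd. destruct (modr_inv d n Hd). apply (Nat.div_unique _ _ _ (modr d n)); lia. Qed.

Lemma divmod_code d c t : c < d -> modr d (c + d * t) = c /\ divr d (c + d * t) = t.
Proof.
  intros Hc. assert (Hd : 0 < d) by lia. rewrite modr_mod, divr_div by auto.
  split. symmetry; apply (Nat.mod_unique _ _ t); lia. symmetry; apply (Nat.div_unique _ _ _ c); lia.
Qed.

Fixpoint tri (s : nat) : nat := match s with O => 0 | S s' => tri s' + S s' end.
Lemma D_tri : D1 tri.
Proof.
  apply (D1_ext (fun s => Rec1 (fun _ => 0) (fun _ s p => p + S s) 0 s)).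
  - intros s. induction s; simpl; auto.
  - assert (D2 (Rec1 (fun _ => 0) (fun _ s p => p + S s))). apply rec2. unfold D1; dp. unfold D3; dp.
    unfold D1; dp.
Qed.
Global Hint Resolve D_tri : core.

Definition cpair (a b : nat) := tri (a + b) + b.
Lemma D_cpair : D2 cpair. Proof. unfold D2, cpair. dp. Qed.
Global Hint Resolve D_cpair : core.

Fixpoint dg (n : nat) : nat := match n with O => 0 | S n' => dg n' + eqv (S n') (tri (S (dg n'))) end.
Lemma D_dg : D1 dg.
Proof.
  apply (D1_ext (fun s => Rec1 (fun _ => 0) (fun _ n p => p + eqv (S n) (tri (S p))) 0 s)).
  - intros s. induction s; simpl; auto.
  - assert (D2 (Rec1 (fun _ => 0) (fun _ n p => p + eqv (S n) (tri (S p))))).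
    apply rec2. unfold D1; dp. unfold D3; dp.
    unfold D1; dp.
Qed.
Global Hint Resolve D_dg : core.

Lemma dg_inv n : tri (dg n) <= n < tri (S (dg n)).
Proof.
  induction n. simpl. lia. cbn [dg]. rewrite eqv_spec.
  destruct (Nat.eqb_spec (S n) (tri (S (dg n)))) as [E|E].
  - rewrite Nat.add_1_r. rewrite <- E. change (tri (S (S (dg n)))) with (tri (S (dg n)) + S (S (dg n))). lia.
  - rewrite Nat.add_0_r. lia.
Qed.
Lemma tri_mono a b : a <= b -> tri a <= tri b.
Proof. induction 1; simpl; lia. Qed.
Lemma dg_unique n s : tri s <= n < tri (S s) -> dg n = s.
Proof.
  intros H. pose proof (dg_inv n). destruct (Nat.lt_trichotomy (dg n) s) as [L|[L|L]]; auto.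
  - apply tri_mono in L. lia.
  - apply tri_mono in L. simpl in *. lia.
Qed.

Definition csnd (n : nat) := n - tri (dg n).
Definition cfst (n : nat) := dg n - csnd n.
Lemma D_csnd : D1 csnd. Proof. unfold D1, csnd. dp. Qed.
Lemma D_cfst : D1 cfst. Proof. unfold D1, cfst, csnd. dp. Qed.
Global Hint Resolve D_csnd D_cfst : core.

Lemma cpair_dg a b : dg (cpair a b) = a + b.
Proof. apply dg_unique. unfold cpair. simpl. lia. Qed.
Lemma cfst_pair a b : cfst (cpair a b) = a.
Proof. unfold cfst, csnd. rewrite cpair_dg. unfold cpair. lia. Qed.
Lemma csnd_pair a b : csnd (cpair a b) = b.
Proof. unfold csnd. rewrite cpair_dg. unfold cpair. lia. Qed.

Lemma cpair_mono a b a' b' : a <= a' -> b <= b' -> cpair a b <= cpair a' b'.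
Proof. intros. unfold cpair. pose proof (tri_mono (a + b) (a' + b')). lia. Qed.

Fixpoint tab (f : nat -> nat) (N n : nat) : nat :=
  match N with O => 0 | S N' => sel (f N') (tab f N' n) (eqv n N') end.
Lemma D_tab f N : D1 (tab f N).
Proof.
  induction N; simpl. unfold D1; dp. unfold D1. dp.
Qed.
Lemma tab_spec f N n : n < N -> tab f N n = f n.
Proof.
  induction N; simpl; intros H. lia. rewrite eqv_spec. destruct (Nat.eqb_spec n N).
  subst; reflexivity. simpl. apply IHN. lia.
Qed.

Import ListNotations.
Local Open Scope nat_scope.

Definition lQ (M : PTM) : list (Q M) := proj1_sig (constructive_indefinite_description _ (Q_finite M)).
Definition lG (M : PTM) : list (Gam M) := proj1_sig (constructive_indefinite_description _ (Gam_finite M)).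
Lemma lQ_in M q : In q (lQ M). Proof. unfold lQ. destruct constructive_indefinite_description; simpl; auto. Qed.
Lemma lG_in M a : In a (lG M). Proof. unfold lG. destruct constructive_indefinite_description; simpl; auto. Qed.

Fixpoint idx {A : Type} (a : A) (l : list A) : nat :=
  match l with [] => 0 | b :: l' => if excluded_middle_informative (a = b) then 0 else S (idx a l') end.
Lemma idx_spec {A} (a d : A) l : In a l -> idx a l < length l /\ nth (idx a l) l d = a.
Proof.
  induction l; simpl; intros H. contradiction.
  destruct (excluded_middle_informative (a = a0)). subst; split; auto; lia.
  destruct H. congruence. destruct (IHl H). split; auto. lia.
Qed.

Definition cG M (a : Gam M) := idx a (lG M).
Definition dG M (n : nat) := nth n (lG M) (blank M).
Definition cQ M (q : Q M) := idx q (lQ M).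
Definition dQ M (n : nat) := nth n (lQ M) (qstart M).
Definition KG M := length (lG M).
Definition KQ M := length (lQ M).
Definition W M := S (KG M).
Lemma cG_lt M a : cG M a < KG M. Proof. apply (idx_spec a (blank M)), lG_in. Qed.
Lemma dG_cG M a : dG M (cG M a) = a. Proof. apply (idx_spec a (blank M)), lG_in. Qed.
Lemma cQ_lt M q : cQ M q < KQ M. Proof. apply (idx_spec q (qstart M)), lQ_in. Qed.
Lemma dQ_cQ M q : dQ M (cQ M q) = q. Proof. apply (idx_spec q (qstart M)), lQ_in. Qed.

Fixpoint encL M (l : list (Gam M)) : nat :=
  match l with [] => 0 | a :: s => S (cG M a) + W M * encL M s end.

Definition enc M (C : Conf M) : nat :=
  cpair (encL M (cleft C)) (cpair (encL M (cright C)) (cpair (cG M (ccur C)) (cQ M (cstate C)))).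

Definition hdN M n := pred (modr (W M) n).
Definition tlN M n := divr (W M) n.
Lemma hd_tl M a s : hdN M (encL M (a :: s)) = cG M a /\ tlN M (encL M (a :: s)) = encL M s.
Proof.
  unfold hdN, tlN. simpl. destruct (divmod_code (W M) (S (cG M a)) (encL M s)) as [E1 E2].
  pose proof (cG_lt M a). unfold W. lia.
  simpl in E1, E2. rewrite E1, E2. auto.
Qed.

Definition dirc (d : Dir) : nat := match d with DLeft => 0 | DStay => 1 | DRight => 2 end.
Definition n2b (i : nat) : bool := match i with O => false | _ => true end.
Definition b2n (b : bool) : nat := if b then 1 else 0.

Definition fdel M (key : nat) : nat :=
  match delta M (n2b (cfst key)) (dQ M (cfst (csnd key))) (dG M (csnd (csnd key))) with
  | (q', a', d) => cpair (cQ M q') (cpair (cG M a') (dirc d))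
  end.
Definition ND M := S (cpair 1 (cpair (KQ M) (KG M))).
Definition tabD M := tab (fdel M) (ND M).

Lemma tabD_spec M i q a : tabD M (cpair (b2n i) (cpair (cQ M q) (cG M a))) =
  match delta M i q a with (q', a', d) => cpair (cQ M q') (cpair (cG M a') (dirc d)) end.
Proof.
  unfold tabD. rewrite tab_spec.
  - unfold fdel. repeat rewrite ?cfst_pair, ?csnd_pair. rewrite dQ_cQ, dG_cG. destruct i; reflexivity.
  - unfold ND. apply Nat.lt_succ_r. apply cpair_mono. destruct i; simpl; lia.
    apply cpair_mono. pose proof (cQ_lt M q); lia. pose proof (cG_lt M a); lia.
Qed.

Definition Lc n := cfst n.
Definition Rc n := cfst (csnd n).
Definition Ac n := cfst (csnd (csnd n)).
Definition Sc n := csnd (csnd (csnd n)).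

Definition stepN M (n i : nat) : nat :=
  sel (sel
        (cpair (S (cfst (csnd (tabD M (cpair i (cpair (Sc n) (Ac n)))))) + W M * Lc n)
               (cpair (tlN M (Rc n)) (cpair (sel (hdN M (Rc n)) (cG M (blank M)) (Rc n))
                                            (cfst (tabD M (cpair i (cpair (Sc n) (Ac n))))))))
        (cpair (Lc n) (cpair (Rc n) (cpair (cfst (csnd (tabD M (cpair i (cpair (Sc n) (Ac n))))))
                                           (cfst (tabD M (cpair i (cpair (Sc n) (Ac n))))))))
        (csnd (csnd (tabD M (cpair i (cpair (Sc n) (Ac n))))) - 1))
      (cpair (tlN M (Lc n))
             (cpair (S (cfst (csnd (tabD M (cpair i (cpair (Sc n) (Ac n)))))) + W M * Rc n)
                    (cpair (sel (hdN M (Lc n)) (cG M (blank M)) (Lc n))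
                           (cfst (tabD M (cpair i (cpair (Sc n) (Ac n))))))))
      (csnd (csnd (tabD M (cpair i (cpair (Sc n) (Ac n)))))).

Global Hint Resolve D_tab : core.
Lemma D_stepN M : D2 (stepN M).
Proof. unfold D2, stepN, Sc, Ac, Lc, Rc, tlN, hdN, tabD. dp. Qed.

Lemma encL_0 M l : encL M l = 0 -> l = [].
Proof. destruct l; simpl; auto. discriminate. Qed.

Lemma stepN_spec M C i : stepN M (enc M C) (b2n i) = enc M (step M i C).
Proof.
  destruct C as [l a r q]. unfold stepN, enc, Sc, Ac, Lc, Rc. simpl.
  repeat rewrite ?cfst_pair, ?csnd_pair. rewrite tabD_spec. unfold step; simpl.
  destruct (delta M i q a) as [[q' a'] d].
  repeat rewrite ?cfst_pair, ?csnd_pair.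
  destruct d; simpl.
  - destruct l as [|c s]; simpl. reflexivity.
    destruct (hd_tl M c s) as [E1 E2]. simpl in E1, E2. rewrite E1, E2.
    destruct (cG M c + W M * encL M s); reflexivity.
  - reflexivity.
  - destruct r as [|c s]; simpl. reflexivity.
    destruct (hd_tl M c s) as [E1 E2]. simpl in E1, E2. rewrite E1, E2.
    destruct (cG M c + W M * encL M s); reflexivity.
Qed.

Import ListNotations.
Local Open Scope nat_scope.

Definition ITER (step : nat -> nat) (s0 f : nat) : nat := Nat.iter f step s0.
Lemma D_iter step : D1 step -> D2 (ITER step).
Proof.
  intros H. apply (D2_ext (Rec1 (fun s => s) (fun _ _ p => step p))).
  - intros a b. induction b; simpl; auto; rewrite IHb; reflexivity.
  - apply rec2. apply D1id. unfold D3. dp.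
Qed.
Global Hint Resolve D_iter : core.

Lemma iter_fix (g : nat -> nat) s f : g s = s -> Nat.iter f g s = s.
Proof. intros H. induction f; simpl; auto. rewrite IHf; auto. Qed.

(* reading bits of a positive, least significant first, prepending digits *)
Definition rstep (B : nat) (dig : nat -> nat) (st : nat) : nat :=
  sel (cpair (divr 2 (cfst st)) (dig (modr 2 (cfst st)) + B * csnd st)) st (cfst st - 1).
Lemma D_rstep B dig : D1 dig -> D1 (rstep B dig).
Proof. intros. unfold D1, rstep. dp. Qed.
Global Hint Resolve D_rstep : core.

Definition lcodeF (B : nat) (dig : nat -> nat) (l : list bool) (acc : nat) : nat :=
  fold_right (fun b a => dig (b2n b) + B * a) acc l.

Lemma rstep_spec B dig p : forall acc f, Pos.to_nat p <= S f ->
  Nat.iter f (rstep B dig) (cpair (Pos.to_nat p) acc) = cpair 1 (lcodeF B dig (pos_bits p) acc).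
Proof.
  induction p; intros acc f Hf; simpl pos_bits; unfold lcodeF; rewrite ?fold_right_app; fold (lcodeF B dig).
  - rewrite Pos2Nat.inj_xI in *. pose proof (Pos2Nat.is_pos p).
    destruct f as [|f]. lia. rewrite Nat.iter_succ_r.
    unfold rstep at 2. rewrite cfst_pair, csnd_pair.
    destruct (divmod_code 2 1 (Pos.to_nat p)) as [E1 E2]. lia.
    replace (1 + 2 * Pos.to_nat p) with (S (2 * Pos.to_nat p)) in * by lia.
    rewrite E1, E2. replace (S (2 * Pos.to_nat p) - 1) with (S (2 * Pos.to_nat p - 1)) by lia.
    simpl sel. rewrite IHp by lia. reflexivity.
  - rewrite Pos2Nat.inj_xO in *. pose proof (Pos2Nat.is_pos p).
    destruct f as [|f]. lia. rewrite Nat.iter_succ_r.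
    unfold rstep at 2. rewrite cfst_pair, csnd_pair.
    destruct (divmod_code 2 0 (Pos.to_nat p)) as [E1 E2]. lia.
    rewrite Nat.add_0_l in E1, E2. rewrite E1, E2. replace (2 * Pos.to_nat p - 1) with (S (2 * Pos.to_nat p - 2)) by lia.
    simpl sel. rewrite IHp by lia. reflexivity.
  - simpl. apply iter_fix. unfold rstep. rewrite cfst_pair. reflexivity.
Qed.

Lemma len_pos_bits p : length (pos_bits p) < Pos.to_nat p.
Proof.
  induction p; simpl; rewrite ?length_app; simpl.
  rewrite Pos2Nat.inj_xI; lia. rewrite Pos2Nat.inj_xO; lia. rewrite Pos2Nat.inj_1. lia.
Qed.
Lemma len_nbar y : length (nbar y) <= y.
Proof. unfold nbar. pose proof (len_pos_bits (Pos.of_succ_nat y)). rewrite SuccNat2Pos.id_succ in H. lia. Qed.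

Definition BYc (y : nat) : nat := csnd (ITER (rstep 3 S) (cpair (S y) 0) y).
Lemma BY_spec y : BYc y = lcodeF 3 S (nbar y) 0.
Proof.
  unfold BYc, ITER, nbar. rewrite <- (SuccNat2Pos.id_succ y) at 1. rewrite rstep_spec.
  apply csnd_pair. rewrite SuccNat2Pos.id_succ. lia.
Qed.
Lemma D_BY : D1 BYc. Proof. unfold D1, BYc. dp. Qed.

Definition symd M (b : nat) : nat := S (sel (cG M (sym1 M)) (cG M (sym0 M)) b).
Lemma D_symd M : D1 (symd M). Proof. unfold D1, symd. dp. Qed.
Global Hint Resolve D_symd : core.
Definition Ex M (x : nat) : nat := csnd (ITER (rstep (W M) (symd M)) (cpair (S x) 0) x).
Lemma Ex_spec M x : Ex M x = encL M (map (fun b : bool => if b then sym1 M else sym0 M) (nbar x)).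
Proof.
  unfold Ex, ITER. rewrite <- (SuccNat2Pos.id_succ x) at 1. rewrite rstep_spec.
  2:{ rewrite SuccNat2Pos.id_succ. lia. }
  rewrite csnd_pair. fold (nbar x). induction (nbar x); simpl; auto.
  rewrite IHl. destruct a; reflexivity.
Qed.
Definition initN M x : nat :=
  cpair 0 (cpair (tlN M (Ex M x)) (cpair (sel (hdN M (Ex M x)) (cG M (blank M)) (Ex M x)) (cQ M (qstart M)))).
Lemma D_initN M : D1 (initN M). Proof. unfold D1, initN, tlN, hdN, Ex. dp. Qed.
Lemma initN_spec M x : initN M x = enc M (init M x).
Proof.
  unfold initN, init. rewrite Ex_spec.
  destruct (map _ (nbar x)) as [|a v]; simpl. reflexivity.
  destruct (hd_tl M a v) as [E1 E2]. simpl in E1, E2. rewrite E1, E2. unfold enc; simpl.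
  destruct (cG M a + W M * encL M v); reflexivity.
Qed.

Definition qfN M := tab (fun qc => b2n (qfinal M (dQ M qc))) (KQ M).
Definition finN M n := sel 0 (qfN M (Sc n)) (Rc n).
Lemma D_finN M : D1 (finN M). Proof. unfold D1, finN, qfN, Sc, Rc. dp. Qed.
Lemma finN_spec M C : finN M (enc M C) = b2n (is_final M C).
Proof.
  destruct C as [l a r q]. unfold finN, enc, Sc, Rc, is_final; simpl.
  repeat rewrite ?cfst_pair, ?csnd_pair. unfold qfN. rewrite tab_spec by apply cQ_lt.
  rewrite dQ_cQ. destruct r; reflexivity.
Qed.

Definition ocode M (o : option (Conf M)) : nat := match o with None => 0 | Some C => S (enc M C) end.
Definition fstep M o i := sel (sel 0 (S (stepN M (pred o) i)) (finN M (pred o))) 0 o.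
Definition fst1 M (o : option (Conf M)) (b : bool) : option (Conf M) :=
  match o with None => None | Some C => if is_final M C then None else Some (step M b C) end.
Lemma fstep_spec M o b : fstep M (ocode M o) (b2n b) = ocode M (fst1 M o b).
Proof.
  destruct o as [C|]; simpl; auto. unfold fstep; simpl. rewrite finN_spec.
  destruct (is_final M C); simpl; auto. rewrite stepN_spec. reflexivity.
Qed.

Definition folstep M st := sel (cpair (fstep M (cfst st) (pred (modr 3 (csnd st)))) (divr 3 (csnd st))) st (csnd st).
Global Hint Resolve D_stepN D_finN : core.
Lemma D_folstep M : D1 (folstep M). Proof. unfold D1, folstep, fstep. dp. Qed.
Global Hint Resolve D_folstep : core.

Definition follow' M (o : option (Conf M)) l := match o with None => None | Some C => follow M C l end.

Lemma fol_spec M l : forall o f, length l <= f ->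
  Nat.iter f (folstep M) (cpair (ocode M o) (lcodeF 3 S l 0)) = cpair (ocode M (follow' M o l)) 0.
Proof.
  induction l as [|b l IH]; intros o f Hf.
  - replace (follow' M o []) with o by (destruct o; reflexivity). simpl. apply iter_fix. unfold folstep. rewrite csnd_pair. reflexivity.
  - destruct f as [|f]. simpl in Hf; lia. rewrite Nat.iter_succ_r.
    unfold folstep at 2. rewrite cfst_pair, csnd_pair. change (lcodeF 3 S (b::l) 0) with (S (b2n b) + 3 * lcodeF 3 S l 0).
    destruct (divmod_code 3 (S (b2n b)) (lcodeF 3 S l 0)) as [E1 E2]. destruct b; simpl; lia.
    fold (lcodeF 3 S l 0) in *. rewrite E1, E2. simpl sel. simpl pred. rewrite fstep_spec.
    rewrite IH by (simpl in Hf; lia). f_equal. destruct o as [C|]; simpl; auto.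
    destruct (is_final M C); reflexivity.
Qed.

Definition leafN M x y : nat :=
  sel (finN M (pred (cfst (ITER (folstep M) (cpair (S (initN M x)) (BYc y)) y)))) 0
      (cfst (ITER (folstep M) (cpair (S (initN M x)) (BYc y)) y)).
Global Hint Resolve D_initN D_BY : core.
Lemma D_leafN M : D2 (leafN M). Proof. unfold D2, leafN. dp. Qed.
Lemma leafN_spec M x y : leafN M x y = b2n (is_leaf M x y).
Proof.
  unfold leafN, ITER. rewrite BY_spec, initN_spec.
  change (S (enc M (init M x))) with (ocode M (Some (init M x))).
  rewrite fol_spec by apply len_nbar. rewrite cfst_pair. unfold is_leaf; simpl.
  destruct (follow M (init M x) (nbar y)) as [C|]; simpl; auto. rewrite finN_spec. reflexivity.
Qed.

Import ListNotations.
Local Open Scope nat_scope.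

Fixpoint P2 (y : nat) : nat :=
  match y with O => 1 | S y' => sel (P2 y' + P2 y') (P2 y') (eqv (S (S y')) (P2 y' + P2 y')) end.
Lemma D_P2 : D1 P2.
Proof.
  apply (D1_ext (fun y => Rec1 (fun _ => 1) (fun _ y p => sel (p + p) p (eqv (S (S y)) (p + p))) 0 y)).
  - intros s. induction s; simpl; auto. rewrite IHs. reflexivity.
  - assert (D2 (Rec1 (fun _ => 1) (fun _ y p => sel (p + p) p (eqv (S (S y)) (p + p))))).
    apply rec2. unfold D1; dp. unfold D3; dp. unfold D1; dp.
Qed.
Global Hint Resolve D_P2 D_leafN : core.

Fixpoint Bc M x y : nat :=
  match y with O => 1
  | S y' => sel ((Bc M x y' - leafN M x y') + (Bc M x y' - leafN M x y')) (Bc M x y' - leafN M x y')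
                (eqv (S (S y')) (P2 y' + P2 y')) end.
Lemma D_Bc M : D2 (Bc M).
Proof.
  apply (D2_ext (Rec1 (fun _ => 1) (fun x y p => sel ((p - leafN M x y) + (p - leafN M x y)) (p - leafN M x y)
                (eqv (S (S y)) (P2 y + P2 y))))).
  - intros a b. induction b; simpl; auto. rewrite IHb. reflexivity.
  - apply rec2. unfold D1; dp. unfold D3; dp.
Qed.
Global Hint Resolve D_Bc : core.

Fixpoint Rm a b j : nat :=
  match j with O => a | S j' => sel (Rm a b j' + Rm a b j' - b) (Rm a b j' + Rm a b j') (lev b (Rm a b j' + Rm a b j')) end.
Lemma D_Rm : D3 Rm.
Proof.
  apply (D3_ext (Rec2 (fun a b => a) (fun a b _ p => sel (p + p - b) (p + p) (lev b (p + p))))).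
  - intros a b c. induction c; simpl; auto. rewrite IHc. reflexivity.
  - apply rec3. unfold D2; dp. unfold D4; dp.
Qed.
Global Hint Resolve D_Rm : core.

Definition Gf M x y i : nat :=
  sel (lev (Bc M x y) (Rm (Bc M x y - 1) (Bc M x y) i + Rm (Bc M x y - 1) (Bc M x y) i)) 1 (leafN M x y * Bc M x y).
Lemma D_Gf M : D3 (Gf M). Proof. unfold D3, Gf. dp. Qed.

Lemma pos_bits_bound p : 2 ^ length (pos_bits p) <= Pos.to_nat p < 2 ^ S (length (pos_bits p)).
Proof.
  induction p; simpl pos_bits; rewrite ?length_app; simpl length.
  - rewrite Pos2Nat.inj_xI. rewrite Nat.add_1_r. simpl in *. lia.
  - rewrite Pos2Nat.inj_xO. rewrite Nat.add_1_r. simpl in *. lia.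
  - rewrite Pos2Nat.inj_1. simpl. lia.
Qed.
Lemma nbar_bound y : 2 ^ length (nbar y) <= S y < 2 ^ S (length (nbar y)).
Proof. unfold nbar. pose proof (pos_bits_bound (Pos.of_succ_nat y)). rewrite SuccNat2Pos.id_succ in H. auto. Qed.
Lemma log_unique a b n : 2 ^ a <= n < 2 ^ S a -> 2 ^ b <= n < 2 ^ S b -> a = b.
Proof.
  intros H1 H2. destruct (Nat.lt_trichotomy a b) as [L|[L|L]]; auto.
  - assert (2 ^ S a <= 2 ^ b) by (apply Nat.pow_le_mono_r; lia). lia.
  - assert (2 ^ S b <= 2 ^ a) by (apply Nat.pow_le_mono_r; lia). lia.
Qed.
Lemma P2_spec y : P2 y = 2 ^ length (nbar y).
Proof.
  induction y. reflexivity.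
  cbn [P2]. rewrite IHy. rewrite eqv_spec.
  pose proof (nbar_bound y) as H1. pose proof (nbar_bound (S y)) as H2.
  set (L := length (nbar y)) in *. set (L' := length (nbar (S y))) in *.
  assert (H3 := H2). simpl (2 ^ S L) in H1. simpl (2 ^ S L') in H3.
  destruct (Nat.eqb_spec (S (S y)) (2 ^ L + 2 ^ L)) as [E|E]; simpl sel.
  - assert (L' = S L). apply (log_unique _ _ (S (S y))). exact H2. simpl. lia.
    rewrite H. simpl. lia.
  - assert (L' = L). apply (log_unique _ _ (S (S y))). exact H2. simpl; lia. rewrite H. reflexivity.
Qed.

Lemma P2_step y : P2 (S y) = P2 y \/ P2 (S y) = P2 y + P2 y.
Proof. cbn [P2]. rewrite eqv_spec. destruct (Nat.eqb (S (S y)) (P2 y + P2 y)); simpl; auto. Qed.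
Lemma P2_pos y : 0 < P2 y.
Proof. rewrite P2_spec. apply Nat.neq_0_lt_0. apply Nat.pow_nonzero. lia. Qed.

Import ListNotations.
Open Scope R_scope.

Lemma INR_P2_pos y : 0 < INR (P2 y).
Proof. apply lt_0_INR. apply P2_pos. Qed.

Lemma PT_eq M x y : PT M x y = / INR (P2 y).
Proof. unfold PT. rewrite P2_spec, pow_INR, pow_inv. simpl (INR 2). reflexivity. Qed.

Lemma sel_ratio b p c : (0 < p)%nat ->
  INR (sel (b + b) b c) / INR (sel (p + p) p c) = INR b / INR p.
Proof.
  intros Hp. destruct c; simpl. reflexivity. rewrite !plus_INR.
  assert (0 < INR p) by (apply lt_0_INR; auto). field. lra.
Qed.

Lemma prodPT1_spec M x y : prodPT1 M x y = INR (Bc M x y) / INR (P2 y).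
Proof.
  induction y. simpl. field.
  cbn [prodPT1 Bc P2]. rewrite sel_ratio by apply P2_pos.
  rewrite leafN_spec. rewrite IHy. pose proof (INR_P2_pos y).
  destruct (is_leaf M x y); simpl b2n.
  - rewrite PT_eq. destruct (Bc M x y) as [|b] eqn:EB.
    + simpl. unfold Rdiv. ring.
    + replace (S b - 1)%nat with b by lia. rewrite S_INR.
      assert (0 <= INR b) by apply pos_INR. field. split; lra.
  - rewrite Nat.sub_0_r. ring.
Qed.

Lemma PT1_leaf_pos M x y : is_leaf M x y = true -> (1 <= Bc M x y)%nat ->
  PT1 M x y = INR (Bc M x y - 1) / INR (Bc M x y).
Proof.
  intros HL HB. unfold PT1, PT0. rewrite HL. rewrite PT_eq, prodPT1_spec.
  pose proof (INR_P2_pos y). rewrite minus_INR by auto.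
  assert (1 <= INR (Bc M x y)) by (apply (le_INR 1); auto). simpl (INR 1). field. split; lra.
Qed.

Lemma PT1_one M x y : (is_leaf M x y = false \/ Bc M x y = 0%nat) -> PT1 M x y = 1.
Proof.
  intros [H|H]; unfold PT1, PT0. rewrite H; reflexivity.
  destruct (is_leaf M x y); auto. rewrite prodPT1_spec, H. simpl (INR 0).
  unfold Rdiv. rewrite Rmult_0_l, Rinv_0. ring.
Qed.

Lemma PT0_PT1 M x y : PT0 M x y = 1 - PT1 M x y.
Proof. unfold PT1, PT0. destruct (is_leaf M x y); ring. Qed.

Lemma digits_inv a b n : (0 < b)%nat -> (a < b)%nat ->
  INR a / INR b = fsum n (fun i => INR (lev b (Rm a b i + Rm a b i)) * (/ 2) ^ (S i))
                  + INR (Rm a b n) / INR b * (/ 2) ^ n /\ (Rm a b n < b)%nat.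
Proof.
  intros Hb Ha. assert (0 < INR b) by (apply lt_0_INR; auto).
  induction n.
  - simpl. split; auto. ring.
  - destruct IHn as [E Hr]. cbn [fsum Rm]. rewrite lev_spec.
    set (r := Rm a b n) in *.
    destruct (Nat.leb_spec b (r + r)); simpl sel.
    + split; [|lia]. rewrite E. rewrite minus_INR by lia. rewrite plus_INR. simpl pow. simpl (INR 1).
      field. lra.
    + split; [|lia]. rewrite E. rewrite plus_INR. simpl pow. simpl (INR 0). field. lra.
Qed.

Lemma Un_cv_half (u : nat -> R) l : (forall n, Rabs (u n - l) <= (/ 2) ^ n) -> Un_cv u l.
Proof.
  intros H eps He. destruct (cv_pow_half 1 eps He) as [N HN]. exists N. intros n Hn.
  specialize (HN n Hn). unfold Rdist in *. rewrite Rminus_0_r in HN.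
  specialize (H n). rewrite pow_inv in H. unfold Rdiv in HN. rewrite Rmult_1_l in HN.
  rewrite Rabs_pos_eq in HN. lra. left. apply Rinv_0_lt_compat. apply pow_lt. lra.
Qed.

Lemma fsum_ones n : fsum n (fun i => 1 * (/ 2) ^ (S i)) = 1 - (/ 2) ^ n.
Proof. induction n; cbn [fsum]. simpl; ring. rewrite IHn. simpl pow. field. Qed.

Lemma fsum_ext n f g : (forall i, (i < n)%nat -> f i = g i) -> fsum n f = fsum n g.
Proof. induction n; simpl; intros H; auto. rewrite IHn, H; auto. Qed.

Lemma Gf01 M x y i : (Gf M x y i = 0 \/ Gf M x y i = 1)%nat.
Proof.
  unfold Gf. destruct (leafN M x y * Bc M x y)%nat; simpl; auto.
  rewrite lev_spec. destruct (Nat.leb _ _); auto.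
Qed.

Lemma main_cv M x y :
  Un_cv (fun K => fsum K (fun i => INR (Gf M x y i) * (/ 2) ^ (S i))) (PT1 M x y).
Proof.
  apply Un_cv_half. intros n.
  destruct (is_leaf M x y) eqn:HL; [destruct (Bc M x y) as [|b] eqn:HB|].
  - rewrite PT1_one by auto.
    rewrite (fsum_ext _ _ (fun i => 1 * (/ 2) ^ (S i))).
    rewrite fsum_ones. replace (1 - (/ 2) ^ n - 1) with (- (/ 2) ^ n) by ring.
    rewrite Rabs_Ropp, Rabs_pos_eq. lra. apply pow_le. lra.
    intros i _. unfold Gf. rewrite leafN_spec, HL, HB. reflexivity.
  - rewrite PT1_leaf_pos by (auto; lia). rewrite HB.
    destruct (digits_inv (S b - 1) (S b) n) as [E Hr]; try lia.
    rewrite E. rewrite (fsum_ext _ _ (fun i => INR (lev (S b) (Rm (S b - 1) (S b) i + Rm (S b - 1) (S b) i)) * (/ 2) ^ (S i))).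
    + set (s := fsum _ _). set (r := Rm (S b - 1) (S b) n) in *.
      replace (s - (s + INR r / INR (S b) * (/ 2) ^ n)) with (- (INR r / INR (S b) * (/ 2) ^ n)) by ring.
      rewrite Rabs_Ropp. assert (0 < INR (S b)) by (apply lt_0_INR; lia).
      assert (INR r < INR (S b)) by (apply lt_INR; auto). assert (0 <= INR r) by apply pos_INR.
      assert (0 < (/ 2) ^ n) by (apply pow_lt; lra).
      assert (0 <= INR r / INR (S b) <= 1). { split. unfold Rdiv; apply Rmult_le_pos; [lra| left; apply Rinv_0_lt_compat; lra].
        apply (Rmult_le_reg_r (INR (S b))); auto. unfold Rdiv. rewrite Rmult_assoc, Rinv_l by lra. lra. }
      rewrite Rabs_pos_eq by nra. nra.
    + intros i _. unfold Gf. rewrite leafN_spec, HL, HB. simpl b2n. reflexivity.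
  - rewrite PT1_one by auto.
    rewrite (fsum_ext _ _ (fun i => 1 * (/ 2) ^ (S i))).
    rewrite fsum_ones. replace (1 - (/ 2) ^ n - 1) with (- (/ 2) ^ n) by ring.
    rewrite Rabs_Ropp, Rabs_pos_eq. lra. apply pow_le. lra.
    intros i _. unfold Gf. rewrite leafN_spec, HL. reflexivity.
Qed.

Import ListNotations.
Open Scope R_scope.

Lemma fsum_zero K f : (forall i, f i = 0) -> fsum K f = 0.
Proof. intros H. induction K; simpl; auto. rewrite IHK, H. ring. Qed.

Lemma fprod_half i : fprod i (fun _ => / 2) = (/ 2) ^ i.
Proof. induction i; simpl; auto. rewrite IHi. ring. Qed.

Lemma Un_cv_after (u v : nat -> R) l N : Un_cv u l -> (forall n, (n >= N)%nat -> v n = u n) -> Un_cv v l.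
Proof.
  intros H E eps He. destruct (H eps He) as [N1 HN]. exists (max N N1). intros n Hn.
  rewrite E by lia. apply HN. lia.
Qed.

Definition rnd : PF := fun l y =>
  if Nat.eqb y (nth 0 l 0%nat) then / 2 else if Nat.eqb y (S (nth 0 l 0%nat)) then / 2 else 0.
Lemma PR_rnd : PR 1 rnd. Proof. apply PR_rand. intros; reflexivity. Qed.

Definition coin : PF := fun _ w => rnd [0%nat] w.
Lemma PR_coin : PR 3 coin.
Proof.
  destruct (cst 2 0) as [g0 [Hg0 Hv0]].
  apply (PR_comp 3 1 rnd [g0]); auto. apply PR_rnd.
  intros g [<-|[]]; auto.
  intros xs w Lx. apply (Un_cv_eventually _ _ 1). intros K HK.
  rewrite (box_single 1 K _ [0%nat]); auto.
  - simpl. rewrite (proj2 (Nat.ltb_lt 0 K)) by lia. simpl. rewrite Hv0 by auto.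
    rewrite pt_eq. unfold coin. ring.
  - intros zs Hz Hne. destruct zs as [|z [|]]; try discriminate. simpl. rewrite Hv0 by auto.
    rewrite pt_neq. ring. intro; subst; auto.
Qed.

Definition hmu : PF := fun _ y => / 2 * fprod y (fun _ => / 2).
Lemma PR_hmu : PR 2 hmu.
Proof.
  apply (PR_min 2 coin). apply PR_coin.
  intros xs Lx. exists (fun _ => / 2). split.
  - intros z. assert (HH := infinite_sum_single (fun j => coin (xs ++ [z]) (S j)) 0%nat).
    cbv beta in HH. replace (/ 2) with (coin (xs ++ [z]) 1%nat) by reflexivity. apply HH.
    intros i Hi. unfold coin, rnd. simpl. destruct i; [lia|]. reflexivity.
  - intros y. unfold hmu, coin, rnd. simpl. reflexivity.
Qed.

Lemma pt_Gf_cases M x y i w :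
  pt (Gf M x y i) w = match w with O => 1 - INR (Gf M x y i) | 1%nat => INR (Gf M x y i) | _ => 0 end.
Proof.
  destruct (Gf01 M x y i) as [E|E]; rewrite E; destruct w as [|[|w]]; unfold pt; simpl; try ring.
Qed.

Lemma ptc_cv M x y w :
  Un_cv (fun K => fsum K (fun i => pt (Gf M x y i) w * (/ 2 * fprod i (fun _ => / 2)))) (PTC M x y w).
Proof.
  assert (E : forall i, / 2 * fprod i (fun _ => / 2) = (/ 2) ^ S i).
  { intros i. rewrite fprod_half. reflexivity. }
  destruct w as [|[|w]].
  - unfold PTC. rewrite PT0_PT1.
    apply (Un_cv_after (fun K => (1 - (/2)^K) - fsum K (fun i => INR (Gf M x y i) * (/ 2) ^ (S i))) _ _ 0).
    + apply CV_minus. apply Un_cv_half. intros n. replace (1 - (/ 2) ^ n - 1) with (- (/ 2) ^ n) by ring.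
      rewrite Rabs_Ropp, Rabs_pos_eq. lra. apply pow_le. lra.
      apply main_cv.
    + intros n _. rewrite <- fsum_ones. induction n; simpl. ring. rewrite IHn, pt_Gf_cases, E. simpl. ring.
  - unfold PTC. apply (Un_cv_after _ _ _ 0 (main_cv M x y)).
    intros n _. apply fsum_ext. intros i _. rewrite pt_Gf_cases, E. reflexivity.
  - unfold PTC. apply (Un_cv_eventually _ _ 0). intros n _. apply fsum_zero. intros i.
    rewrite pt_Gf_cases. ring.
Qed.

Import ListNotations.
Open Scope R_scope.

Theorem mainTheorem10 (M : PTM) :
  exists h : PF, PR 2 h /\ (forall x y z, h [x; y] z = PTC M x y z).
Proof.
  destruct (D_Gf M) as [gG [HgG HgGv]].
  set (pi1 := fun (xs : list nat) y => pt (nth 0 xs 0%nat) y).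
  set (pi2 := fun (xs : list nat) y => pt (nth 1 xs 0%nat) y).
  exists (fun xs w => PTC M (nth 0 xs 0%nat) (nth 1 xs 0%nat) w). split; [|reflexivity].
  apply (PR_comp 2 3 gG [pi1; pi2; hmu]); auto.
  - intros g [<-|[<-|[<-|[]]]].
    + apply (PR_proj 2 1). lia. intros; reflexivity.
    + apply (PR_proj 2 2). lia. intros; reflexivity.
    + apply PR_hmu.
  - intros xs w Lx. destruct xs as [|x [|y [|]]]; try discriminate. simpl nth.
    apply (Un_cv_after _ _ _ (S (x + y)) (ptc_cv M x y w)). intros K HK.
    cbn [box]. rewrite (fsum_single K _ x).
    2:{ intros i Hi. apply fsum_zero. intros j. apply fsum_zero. intros k.
        simpl. unfold pi1. simpl. rewrite pt_neq by auto. ring. }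
    rewrite (proj2 (Nat.ltb_lt x K)) by lia.
    rewrite (fsum_single K _ y).
    2:{ intros i Hi. apply fsum_zero. intros k.
        simpl. unfold pi2. simpl. rewrite pt_neq by auto. ring. }
    rewrite (proj2 (Nat.ltb_lt y K)) by lia.
    apply fsum_ext. intros i _. simpl. unfold pi1, pi2. simpl. rewrite !pt_eq.
    rewrite HgGv by reflexivity. simpl. unfold hmu. ring.
Qed.
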